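(* For all integers $0\le k\le n$, \[ B^{\mathrm{fmaj}}_{n,n-k}(q)=\sum_{\ell=0}^{k}q^{(n-k)(2\ell-n-k)}\,B_{n,n-\ell}(q)\,{n-\ell\brack k-\ell}_{q^2}. \]
   Context: $\mathcal{B}_n$ is the group of signed permutations of $[n]$ (bijections $\pi$ of $\{\pm1,\dots,\pm n\}$ with $\pi(-i)=-\pi(i)$, written $\pi=\pi_1\cdots\pi_n$), integers ordered naturally. Set $\pi_0=0$; $\mathrm{Des}_B(\pi)=\{i\in\{0,\dots,n-1\}:\pi_i>\pi_{i+1}\}$, $\mathrm{des}_B(\pi)=|\mathrm{Des}_B(\pi)|$, $\mathrm{neg}(\pi)=|\{i\in[n]:\pi_i<0\}|$, $\mathrm{fmaj}(\pi)=\sum_{i\in\mathrm{Des}_B(\pi)}2i+\mathrm{neg}(\pi)$; $B_{n,k}(q)$ is defined by $\sum_{\pi\in\mathcal{B}_n}t^{\mathrm{des}_B(\pi)}q^{\mathrm{fmaj}(\pi)}=\sum_kB_{n,k}(q)t^k$. For $0\le k\le n$ let $\mathcal{B}^{>}_{n,k}=\{(\pi,S):\pi\in\mathcal{B}_n,\ S\subseteq\mathrm{Des}_B(\pi),\ |S|=k\}$ (descent-starred signed permutations; elements of $S$ are the starred descents). For $(\pi,S)\in\mathcal{B}^{>}_{n,k}$ define $\mathrm{fmaj}((\pi,S))=\mathrm{fmaj}(\pi)-\sum_{j\in S}\bigl(2|\mathrm{Des}_B(\pi)\cap\{j,\dots,n-1\}|-1\bigr)$, and $B^{\mathrm{fmaj}}_{n,k}(q)=\sum_{(\pi,S)\in\mathcal{B}^{>}_{n,k}}q^{\mathrm{fmaj}((\pi,S))}$.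 $[k]_q=1+\dots+q^{k-1}$, $[n]_q!=\prod_{i=1}^n[i]_q$, ${n\brack k}_q=\frac{[n]_q!}{[k]_q![n-k]_q!}$, and the subscript $q^2$ means $q$ is replaced by $q^2$. *)

(* Defs.v *)
From HB Require Import structures.
From mathcomp Require Import all_boot all_order all_algebra.
From mathcomp Require Import fingroup perm.
Set Implicit Arguments. Unset Strict Implicit. Unset Printing Implicit Defensive.
Import Order.TTheory GRing.Theory Num.Theory.
Local Open Scope ring_scope.

(* A signed permutation of [n] is encoded by a permutation s of 'I_n and a
   sign vector e : pi_(i+1) = (-1)^(e i) * (s i + 1), for i : 'I_n. *)
Definition sperm (n : nat) : finType := ({perm 'I_n} * {ffun 'I_n -> bool})%type.

Definition pval n (p : sperm n) (i : nat) : int :=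
  match i with
  | 0 => 0
  | j.+1 => if (insub j : option 'I_n) is Some i then
              (if p.2 i then - ((p.1 i).+1)%:Z else ((p.1 i).+1)%:Z)
            else 0
  end.

Definition DesB n (p : sperm n) : {set 'I_n} :=
  [set i : 'I_n | pval p (val i).+1 < pval p (val i)].

Definition desB n (p : sperm n) : nat := #|DesB p|.

Definition negB n (p : sperm n) : nat := #|[set i : 'I_n | pval p (val i).+1 < 0]|.

Definition fmaj n (p : sperm n) : nat := (\sum_(i in DesB p) 2 * val i + negB p)%N.

Definition fmajS n (p : sperm n) (S : {set 'I_n}) : int :=
  (fmaj p)%:Z - \sum_(j in S)
     (2 * (#|[set i in DesB p | (val j <= val i)%N]|)%:Z - 1).

Section Polys.
Variable F : fieldType.
Variable q : F.

Definition Bnk (n k : nat) : F :=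
  \sum_(p : sperm n | desB p == k) q ^+ fmaj p.

Definition Bfmaj (n k : nat) : F :=
  \sum_(p : sperm n) \sum_(S : {set 'I_n} | (S \subset DesB p) && (#|S| == k))
      q ^ fmajS p S.

End Polys.

Definition qint (F : fieldType) (x : F) (k : nat) : F := \sum_(i < k) x ^+ i.
Definition qfact (F : fieldType) (x : F) (n : nat) : F := \prod_(i < n) qint x i.+1.
Definition qbinom (F : fieldType) (x : F) (n k : nat) : F :=
  qfact x n / (qfact x k * qfact x (n - k)).

Definition Fq : fieldType := {fraction {poly int}}.
Definition qX : Fq := tofrac ('X : {poly int}).

(* Main.v *)
Require Import Defs.
From HB Require Import structures.
From mathcomp Require Import all_boot all_order all_algebra.
From mathcomp Require Import perm.
From mathcomp Require Import zify ring.
Import Order.TTheory GRing.Theory Num.Theory.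
Local Open Scope ring_scope.

Set Implicit Arguments. Unset Strict Implicit.

Section Comb.
Variable F : fieldType.
Variable w : nat -> F.
Variable n : nat.

Definition rk (D : {set 'I_n}) (j : 'I_n) : nat := #|[set i in D | (val j <= val i)%N]|.

Definition E (D : {set 'I_n}) (m : nat) : F :=
  \sum_(S : {set 'I_n} | (S \subset D) && (#|S| == m)) \prod_(j in S) w (rk D j).

Fixpoint e (d m : nat) : F :=
  match d, m with
  | 0, 0 => 1
  | 0, _ => 0
  | d'.+1, 0 => 1
  | d'.+1, m'.+1 => e d' m + w d * e d' m'
  end.

Lemma E_e k : forall (D : {set 'I_n}) m, #|D| = k -> E D m = e k m.
Proof.
elim: k => [|k IH] D m hD.
  have -> : D = set0 by apply/eqP; rewrite -cards_eq0 hD.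
  rewrite /E (eq_bigl (fun S => (S == set0) && (m == 0%N))); last first.
    move=> S; rewrite subset0; case: eqP => //= ->; by rewrite cards0 eq_sym.
  case: m => [|m] /=.
    by rewrite (big_pred1 set0) ?big_set0 // => S; rewrite andbT.
  by rewrite big_pred0 // => S; rewrite andbF.
have [j0 j0D] : {j0 | j0 \in D}.
  by case: (pickP (mem D)) => [x Hx|/eq_card0]; [exists x|rewrite hD].
pose j1 := [arg min_(i < j0 in D) val i].
have [j1D j1min] : j1 \in D /\ forall i, i \in D -> (val j1 <= val i)%N.
  by rewrite /j1; case: arg_minnP.
set D' := D :\ j1.
have hD' : #|D'| = k by move: hD; rewrite (cardsD1 j1) j1D => -[].
have rkD' : forall j, j \in D' -> rk D j = rk D' j.
  move=> j; rewrite in_setD1 => /andP[jn1 jD]; rewrite /rk; apply: eq_card => i; rewrite !inE; case: (eqVneq i j1) => [->|//].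
  have := j1min _ jD; rewrite leq_eqVlt => /orP[/eqP /val_inj E1|lt].
    by rewrite E1 eqxx in jn1.
  by rewrite j1D leqNgt lt.
have rkj1 : rk D j1 = k.+1.
  rewrite /rk -hD; apply: eq_card => i; rewrite !inE.
  by case iD: (i \in D) => //=; rewrite j1min.
rewrite /E (bigID (fun S : {set 'I_n} => j1 \in S)) /= addrC.
have H1 : \sum_(S : {set 'I_n} | ((S \subset D) && (#|S| == m)) && (j1 \notin S))
     \prod_(j in S) w (rk D j) = e k m.
  rewrite -(IH D' m hD') /E; apply: eq_big.
    move=> S; rewrite andbC andbA; congr (_ && _).
    rewrite /D'; apply/idP/idP.
      move=> /andP[j1S SD]; apply/subsetP => x xS; rewrite in_setD1 (subsetP SD) // andbT.
      by apply: contraNneq j1S => <-.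
    move=> SD'; have SD : S \subset D by apply: subset_trans SD' (subsetDl _ _).
    rewrite SD andbT; apply/negP => j1S; have := subsetP SD' _ j1S.
    by rewrite in_setD1 eqxx.
  move=> S /andP[/andP[SD _] j1S]; apply: eq_bigr => j jS; rewrite rkD' //.
  by rewrite /D' in_setD1 (subsetP SD) // andbT; apply: contraNneq j1S => <-.
rewrite H1; case: m H1 => [|m] H1.
  rewrite big_pred0 ?addr0; first by case: (k).
  move=> S; apply/negbTE; apply/negP => /andP[/andP[_ /eqP/cards0_eq ->]].
  by rewrite inE.
rewrite /=; congr (_ + _).
rewrite (reindex_onto (fun S => j1 |: S) (fun S => S :\ j1)) /=; last first.
  by move=> S /andP[_ j1S]; rewrite setD1K.
rewrite -(IH D' m hD') /E mulr_sumr; apply: eq_big.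
  move=> S; rewrite setU11 andbT.
  case j1S: (j1 \in S).
    have -> : ((j1 |: S) :\ j1 == S) = false.
      by apply/negbTE; apply: contraTneq j1S => <-; rewrite setD11.
    rewrite andbF; apply/esym; apply/negbTE/negP => /andP[SD' _]; have := subsetP SD' _ j1S.
    by rewrite in_setD1 eqxx.
  rewrite setU1K ?j1S // eqxx andbT cardsU1 j1S add1n eqSS; congr (_ && _).
  rewrite subUset sub1set j1D /=; apply/idP/idP.
    move=> SD; apply/subsetP => x xS; rewrite in_setD1 (subsetP SD) // andbT.
    by apply: contraTneq xS => ->; rewrite j1S.
  by move=> SD'; apply: subset_trans SD' (subsetDl _ _).
move=> S /andP[/andP[/andP[SD _] _] /eqP hS].
have j1S : j1 \notin S by rewrite -hS setD11.
rewrite big_setU1 //= rkj1; congr (_ * _); apply: eq_bigr => j jS.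
rewrite rkD' //; rewrite in_setD1 (subsetP SD) ?andbT; last by rewrite inE jS orbT.
by apply: contraNneq j1S => <-.
Qed.
End Comb.

Section Helpers.
Variable R : comRingType.
Lemma h1 (A C I X Q D : R) : A*(C*I)*(X*Q*D) = X*I*(A*C*(Q*D)). Proof. ring. Qed.
Lemma h2 (A B C Q D : R) : A*B*C*(Q*D) = B*(A*C*(Q*D)). Proof. ring. Qed.
Lemma h3 (X I J Fd : R) : X*I*Fd + J*Fd = Fd*(J + X*I). Proof. ring. Qed.
Lemma h4 (A B X Q J Fd : R) : A*B*(X*Q*0) + J*Fd = Fd*(J + X*0). Proof. ring. Qed.
End Helpers.

Section Alg.
Variable F : fieldType.
Variable q : F.
Hypothesis q0 : q != 0.
Definition wq (r : nat) : F := q ^ (- (2 * r%:Z - 1)).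
Local Notation x := (q ^+ 2).
Local Notation ee := (e wq).

Lemma e_d0 d : ee d 0 = 1. Proof. by case: d. Qed.

Lemma e_gt d m : (d < m)%N -> ee d m = 0.
Proof.
elim: d m => [|d IH] [|m] //= h.
by rewrite !IH ?mulr0 ?addr0 // ltnW.
Qed.

Lemma qint_split d m : (m <= d)%N ->
  qint x d.+1 = qint x m.+1 + x ^+ m.+1 * qint x (d - m).
Proof.
move=> hm; rewrite /qint -!(big_mkord xpredT) (big_cat_nat _ (n:=m.+1)) //=.
congr (_ + _); rewrite -{1}(add0n m.+1) big_addn mulr_sumr.
have -> : (d.+1 - m.+1 = d - m - 0)%N by rewrite subn0.
by rewrite subn0; apply: eq_bigr => i _; rewrite -exprD addnC.
Qed.

Lemma qfactS k : qfact x k.+1 = qfact x k * qint x k.+1.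
Proof. by rewrite /qfact big_ord_recr. Qed.

Lemma fact_e d : forall m, (m <= d)%N ->
  qfact x m * qfact x (d - m) * (q ^ (m%:Z * (2 * d%:Z - m%:Z)) * ee d m) = qfact x d.
Proof.
elim: d => [|d IH] [|m] //= hm.
- by rewrite /qfact !big_ord0 /= !mul1r.
- by rewrite subn0 /qfact big_ord0 !mul1r mulr1.
have hmd : (m <= d)%N by [].
have hP : q ^ ((m.+1)%:Z * (2 * (d.+1)%:Z - (m.+1)%:Z)) * wq d.+1
          = q ^ (m%:Z * (2 * d%:Z - m%:Z)).
  rewrite /wq -expfzDr //; congr (_ ^ _); lia.
have hQ : q ^ ((m.+1)%:Z * (2 * (d.+1)%:Z - (m.+1)%:Z))
          = x ^+ m.+1 * q ^ ((m.+1)%:Z * (2 * d%:Z - (m.+1)%:Z)).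
  rewrite -exprM exprnP -expfzDr //; congr (_ ^ _); lia.
rewrite subSS mulrDr mulrDr [X in _ + _ * X]mulrA hP hQ [RHS]qfactS (qint_split hmd).
have T2 : qfact x m.+1 * qfact x (d - m) * (q ^ (m%:Z * (2 * d%:Z - m%:Z)) * ee d m)
   = qint x m.+1 * qfact x d.
  rewrite -(IH m hmd) qfactS.
  generalize (q ^ (m%:Z * (2 * d%:Z - m%:Z))) => Q.
  exact: h2.
rewrite T2.
case: (ltnP m d) => hlt.
  have T1 : qfact x m.+1 * qfact x (d - m) *
     (x ^+ m.+1 * q ^ ((m.+1)%:Z * (2 * d%:Z - (m.+1)%:Z)) * ee d m.+1)
     = x ^+ m.+1 * qint x (d - m) * qfact x d.
    rewrite -(IH m.+1 hlt).
    have -> : (d - m = (d - m.+1).+1)%N by lia.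
    rewrite (qfactS (d - m.+1)); exact: h1.
  by rewrite T1; apply: h3.
have -> : d = m by apply/eqP; rewrite eqn_leq hmd hlt.
by rewrite e_gt // subnn /qint big_ord0; apply: h4.
Qed.

End Alg.

Section Main.
Variable F : fieldType.
Variable q : F.
Hypothesis q0 : q != 0.
Local Notation x := (q ^+ 2).
Local Notation ee := (e (wq q)).

Lemma e_qbinom d m : (m <= d)%N -> (forall i, (i <= d)%N -> qfact x i != 0) ->
  ee d m = q ^ (m%:Z * (m%:Z - 2 * d%:Z)) * qbinom x d (d - m).
Proof.
move=> hm hnz; rewrite /qbinom subKn // -(fact_e q0 hm).
have hA := hnz m hm; have hB := hnz (d - m)%N (leq_subr _ _).
rewrite [qfact x m * _]mulrC [_ * (q ^ _ * _)]mulrC mulfK ?mulf_neq0 //.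
rewrite mulrA -expfzDr //.
have -> : (m%:Z * (m%:Z - 2 * d%:Z) + m%:Z * (2 * d%:Z - m%:Z)) = 0 by lia.
by rewrite expr0z mul1r.
Qed.

Lemma inner n (p : sperm n) m :
  \sum_(S : {set 'I_n} | (S \subset DesB p) && (#|S| == m)) q ^ fmajS p S
  = q ^+ fmaj p * ee (desB p) m.
Proof.
rewrite -(E_e (wq q) m (erefl (desB p))) /E mulr_sumr; apply: eq_bigr => S _.
rewrite /fmajS expfzDr // -sumrN exprnP.
rewrite (big_morph (fun z => q ^ z) (fun a b => expfzDr a b q0) (expr0z q)).
by [].
Qed.

Lemma desB_le n (p : sperm n) : (desB p <= n)%N.
Proof. by rewrite /desB (leq_trans (max_card _)) ?card_ord. Qed.

Lemma Bfmaj_sum n m : Bfmaj q n m = \sum_(0 <= d < n.+1) ee d m * Bnk q n d.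
Proof.
rewrite /Bfmaj; under eq_bigr do rewrite inner.
rewrite (partition_big (fun p : sperm n => (inord (desB p) : 'I_n.+1)) xpredT) //=.
rewrite big_mkord; apply: eq_bigr => d _.
have hq : forall p : sperm n, (inord (desB p) == d :> 'I_n.+1) = (desB p == d).
  by move=> p; rewrite -(inj_eq val_inj) /= inordK // ltnS desB_le.
rewrite /Bnk mulr_sumr; apply: eq_big => [p|p]; first by rewrite hq.
by rewrite hq => /eqP ->; rewrite mulrC.
Qed.

Lemma main_gen n k : (k <= n)%N -> (forall i, (i <= n)%N -> qfact x i != 0) ->
  Bfmaj q n (n - k) =
  \sum_(0 <= l < k.+1)
     q ^ ((n - k)%:Z * (2 * l%:Z - n%:Z - k%:Z)) * Bnk q n (n - l)
       * qbinom x (n - l) (k - l).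
Proof.
move=> hk hnz.
rewrite Bfmaj_sum (big_cat_nat _ (n:=(n-k)%N)) //=; last by lia.
rewrite big_nat_cond big1 ?add0r; last first.
  by move=> i /andP[/andP[_ hi] _]; rewrite e_gt // mul0r.
rewrite -{1}(add0n (n - k)%N) big_addn.
have -> : (n.+1 - (n - k) = k.+1)%N by lia.
rewrite big_nat_rev /=; apply: eq_big_nat => l /andP[_ hl].
have -> : (0 + k.+1 - l.+1 + (n - k) = n - l)%N by lia.
rewrite e_qbinom; last 2 first.
- by lia.
- by move=> i hi; apply: hnz; lia.
have -> : (n - l - (n - k) = k - l)%N by lia.
set B := qbinom _ _ _; set C := Bnk _ _ _.
rewrite [LHS]mulrAC; congr (_ * _ * _).
congr (q ^ (_ * _)); lia.
Qed.

End Main.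

Lemma qX_neq0 : qX != 0.
Proof. by rewrite /qX tofrac_eq0 polyX_eq0. Qed.

Lemma qint_neq0 i : qint (qX ^+ 2) i.+1 != 0.
Proof.
rewrite /qint /qX -tofracXn.
under eq_bigr do rewrite -tofracXn.
rewrite -raddf_sum tofrac_eq0; apply/eqP => h.
have := congr1 (fun p : {poly int} => p.[1]) h.
rewrite horner_sum horner0.
under eq_bigr do rewrite -exprM hornerXn expr1n.
rewrite sumr_const card_ord => /eqP; rewrite pnatr_eq0.
by [].
Qed.

Lemma qfact_neq0 i : qfact (qX ^+ 2) i != 0.
Proof. by rewrite /qfact; apply/prodf_neq0 => j _; apply: qint_neq0. Qed.

Unset Implicit Arguments. Set Strict Implicit.

Theorem proposition2p4 (n k : nat) : (k <= n)%N ->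
  Bfmaj qX n (n - k) =
  \sum_(0 <= l < k.+1)
     qX ^ ((n - k)%:Z * (2 * l%:Z - n%:Z - k%:Z)) * Bnk qX n (n - l)
       * qbinom (qX ^+ 2) (n - l) (k - l).
Proof.
move=> hk; apply: main_gen => //; first exact: qX_neq0.
by move=> i _; apply: qfact_neq0.
Qed.
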